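(* Let $\ell\ge 0$ be an integer. Each of the following two $2\times(2\ell+3)$ matrices, listed column by column, is a $(2,2\ell+3,1)$-tropical code within maximum delay $\ell$: (1) the columns $(0,\infty),(0,\ell),(0,\ell-1),\dots,(0,1),(0,0),(1,0),(2,0),\dots,(\ell,0),(\infty,0)$; (2) the columns $(0,\infty)$, then $(i,\ell-i)$ for $i=0,\dots,\ell$ interleaved with $(i,\ell-i+1)$ for $i=1,\dots,\ell$ in the order $(0,\ell),(1,\ell),(1,\ell-1),(2,\ell-1),\dots,(\ell-1,1),(\ell,1),(\ell,0)$, and finally $(\infty,0)$. (Each pair $(u,v)$ denotes the column with first entry $u$ and second entry $v$.)
   Context: Tropical arithmetic on $\mathbb{R}\cup\{\infty\}$: $x\oplus y=\min(x,y)$, $x\odot y=x+y$, with $x\oplus\infty=x$ and $x\odot\infty=\infty$. For a matrix $S$ with $T$ rows and $N$ columns and a column vector $\mathbf{x}$ of length $N$, $S\odot\mathbf{x}$ is the vector whose $t$-th entry is $\min_{j}(S_{tj}+x_j)$. A $(T,N,D)$-tropical code is a matrix $S\in(\{0\}\cup\mathbb{N}\cup\{\infty\})^{T\times N}$ such that for any two distinct vectors $\mathbf{x},\mathbf{y}\in(\{0\}\cup\mathbb{N}\cup\{\infty\})^{N}$, each having at most $D$ finite entries, $S\odot\mathbf{x}\ne S\odot\mathbf{y}$. It is within maximum delay $\ell$ if $S\in\{0,1,\dots,\ell,\infty\}^{T\times N}$. *)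

(* Defs.v *)
From mathcomp Require Import all_boot all_algebra.
Set Implicit Arguments. Unset Strict Implicit. Unset Printing Implicit Defensive.

(* Tropical semiring on {0} ∪ N ∪ {∞}: [Some n] = n, [None] = ∞. *)
Definition tval := option nat.

Definition tmul (a b : tval) : tval :=
  match a, b with Some m, Some n => Some (m + n) | _, _ => None end.

Definition tadd (a b : tval) : tval :=
  match a, b with
  | None, y => y
  | x, None => x
  | Some m, Some n => Some (minn m n)
  end.

Definition tmatvec T N (S : 'M[tval]_(T, N)) (x : 'cV[tval]_N) : 'cV[tval]_T :=
  \col_(t < T) \big[tadd/None]_(j < N) tmul (S t j) (x j ord0).

Definition nfinite N (x : 'cV[tval]_N) : nat := #|[set j : 'I_N | x j ord0 != None]|.

Definition tropical_code T N (D : nat) (S : 'M[tval]_(T, N)) : Prop :=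
  forall x y : 'cV[tval]_N,
    nfinite x <= D -> nfinite y <= D -> x <> y -> tmatvec S x <> tmatvec S y.

Definition within_delay T N (l : nat) (S : 'M[tval]_(T, N)) : Prop :=
  forall i j, S i j = None \/ exists k, k <= l /\ S i j = Some k.

Definition col1 (l j : nat) : tval * tval :=
  if j == 0 then (Some 0, None)
  else if j <= l.+1 then (Some 0, Some (l.+1 - j))
  else if j <= 2 * l + 1 then (Some (j - l.+1), Some 0)
  else (None, Some 0).

(* column j (0-indexed) of code (2); for k = j-1 in 0..2l:
   k = 2i gives (i, l-i), k = 2i-1 gives (i, l-i+1) *)
Definition col2 (l j : nat) : tval * tval :=
  if j == 0 then (Some 0, None)
  else if j <= 2 * l + 1 then
    let k := j.-1 in
    if odd k then (Some k./2.+1, Some (l - k./2))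
    else (Some k./2, Some (l - k./2))
  else (None, Some 0).

Definition mx_of_cols (l : nat) (c : nat -> nat -> tval * tval) : 'M[tval]_(2, 2 * l + 3) :=
  \matrix_(i < 2, j < 2 * l + 3) (if val i == 0 then (c l (val j)).1 else (c l (val j)).2).

Definition code1 l := mx_of_cols l col1.
Definition code2 l := mx_of_cols l col2.

(* Main.v *)
Require Import Defs.
From HB Require Import structures.
From mathcomp Require Import all_boot all_algebra zify.

Lemma taddA : associative tadd.
Proof. by case=> [a|] [b|] [c|] //=; rewrite minnA. Qed.
Lemma taddC : commutative tadd.
Proof. by case=> [a|] [b|] //=; rewrite minnC. Qed.
Lemma tadd0 : left_id None tadd.
Proof. by case. Qed.
HB.instance Definition _ := Monoid.isComLaw.Build Defs.tval None tadd taddA taddC tadd0.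

Lemma big_delta N (j : 'I_N) (F : 'I_N -> Defs.tval) :
  (forall k, k != j -> F k = None) -> \big[tadd/None]_(k < N) F k = F j.
Proof.
move=> H; rewrite (bigD1 j) //= big1; first by case: (F j).

by move=> k /H.
Qed.

Lemma small_vec N (x : 'cV[Defs.tval]_N) : nfinite x <= 1 ->
  x = const_mx None \/ exists j a, x = (\col_(k < N) (if k == j then Some a else None))%R.
Proof.
rewrite /nfinite leq_eqVlt ltnS leqn0; case/orP.
  case/cards1P => j Hj; right.
  have : j \in [set j0 | x j0 ord0 != None] by rewrite Hj set11.
  rewrite inE; case E: (x j ord0) => [a|] // _.
  exists j, a; apply/matrixP => k i; rewrite !mxE (ord1 i).
  case: eqP => [->//|/eqP nkj].
  apply/eqP; apply: contraR nkj => H.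
  have : k \in [set j0 | x j0 ord0 != None] by rewrite inE.
  by rewrite Hj inE.
move/eqP/cards0_eq => H; left; apply/matrixP => k i; rewrite !mxE (ord1 i).
apply/eqP; apply: contraT => Hk.
have : k \in [set j0 | x j0 ord0 != None] by rewrite inE.
by rewrite H inE.
Qed.

Lemma code_lemma N (S : 'M[Defs.tval]_(2, N)) :
  (forall j, S ord0 j != None \/ S (lift ord0 ord0) j != None) ->
  (forall j j' a a', tmul (S ord0 j) (Some a) = tmul (S ord0 j') (Some a') ->
     tmul (S (lift ord0 ord0) j) (Some a) = tmul (S (lift ord0 ord0) j') (Some a') ->
     j = j' /\ a = a') ->
  tropical_code 1 S.
Proof.
move=> Hf Hi x y /small_vec Hx /small_vec Hy nxy E.
have E0 : forall i, tmatvec S x i ord0 = tmatvec S y i ord0 by move=> i; rewrite E.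
have Z : forall i, tmatvec S (const_mx None) i ord0 = None.
  move=> i; rewrite mxE big1 // => k _; rewrite mxE; by case: (S i k).
have D : forall j a i, tmatvec S ((\col_(k < N) (if k == j then Some a else None))%R) i ord0 = tmul (S i j) (Some a).
  move=> j a i; rewrite /tmatvec mxE (@big_delta _ j) ?mxE ?eqxx // => k nk.
  by rewrite mxE (negbTE nk); case: (S i k).
case: Hx Hy E0 nxy => [->|[j [a ->]]] [->|[j' [a' ->]]] E0 nxy.
- by case: nxy.
- case: (Hf j') => H; [move: (E0 ord0)|move: (E0 (lift ord0 ord0))];
  rewrite Z D; move: H; case: (S _ j') => //.
- case: (Hf j) => H; [move: (E0 ord0)|move: (E0 (lift ord0 ord0))];
  rewrite Z D; move: H; case: (S _ j) => //.
- move: (E0 ord0) (E0 (lift ord0 ord0)); rewrite !D => e1 e2.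
  by case: (Hi _ _ _ _ e1 e2) => e3 e4; apply: nxy; rewrite e3 e4.
Qed.

Ltac fin := rewrite /=; intros; try discriminate;
  repeat match goal with H : Some _ = Some _ |- _ => case: H => H end;
  split; lia.

Lemma col1_inj l j j' a a' : j < 2 * l + 3 -> j' < 2 * l + 3 ->
  tmul (Defs.col1 l j).1 (Some a) = tmul (Defs.col1 l j').1 (Some a') ->
  tmul (Defs.col1 l j).2 (Some a) = tmul (Defs.col1 l j').2 (Some a') -> j = j' /\ a = a'.
Proof.
move=> hj hj'; rewrite /Defs.col1.
repeat (case: ifP => ?); fin.
Qed.

Lemma col2_inj l j j' a a' : j < 2 * l + 3 -> j' < 2 * l + 3 ->
  tmul (Defs.col2 l j).1 (Some a) = tmul (Defs.col2 l j').1 (Some a') ->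
  tmul (Defs.col2 l j).2 (Some a) = tmul (Defs.col2 l j').2 (Some a') -> j = j' /\ a = a'.
Proof.
move=> hj hj'; rewrite /Defs.col2.
have := odd_double_half j.-1; have := odd_double_half j'.-1.
case: (odd j.-1); case: (odd j'.-1); rewrite ?add0n ?add1n -!muln2 => h1 h2;
repeat (case: ifP => ?); fin.
Qed.

Ltac dfin := first [by left | right; eexists; split; [|reflexivity]; lia].

Lemma wd1 l : within_delay l (code1 l).
Proof.
move=> i j; rewrite /code1 /mx_of_cols mxE.
have := ltn_ord j; move: (val j) => n hn.
rewrite /Defs.col1; case: ifP => _; repeat (case: ifP => ?); rewrite /=; dfin.
Qed.

Lemma wd2 l : within_delay l (code2 l).
Proof.
move=> i j; rewrite /code2 /mx_of_cols mxE.
have := ltn_ord j; move: (val j) => n hn.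
rewrite /Defs.col2; have := odd_double_half n.-1.
case: (odd n.-1); rewrite ?add0n ?add1n -!muln2 => h1;
case: ifP => _; repeat (case: ifP => ?); rewrite /=; dfin.
Qed.

Lemma nz1 l (j : 'I_(2 * l + 3)) :
  code1 l ord0 j != None \/ code1 l (lift ord0 ord0) j != None.
Proof.
rewrite /code1 /mx_of_cols !mxE /= /Defs.col1.
by repeat (case: ifP => ?); rewrite /=; auto.
Qed.

Lemma nz2 l (j : 'I_(2 * l + 3)) :
  code2 l ord0 j != None \/ code2 l (lift ord0 ord0) j != None.
Proof.
rewrite /code2 /mx_of_cols !mxE /= /Defs.col2.
by repeat (case: ifP => ?); rewrite /=; auto.
Qed.

Theorem mainTheorem2 (l : nat) :
  (tropical_code 1 (code1 l) /\ within_delay l (code1 l)) /\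
  (tropical_code 1 (code2 l) /\ within_delay l (code2 l)).
Proof.
split; split; try exact: wd1; try exact: wd2; apply: code_lemma.
- exact: nz1.
- move=> j j' a a'; rewrite /code1 /mx_of_cols !mxE /= => e1 e2.
  case: (col1_inj _ _ _ _ _ (ltn_ord j) (ltn_ord j') e1 e2) => /val_inj -> ->.
  by split.
- exact: nz2.
- move=> j j' a a'; rewrite /code2 /mx_of_cols !mxE /= => e1 e2.
  case: (col2_inj _ _ _ _ _ (ltn_ord j) (ltn_ord j') e1 e2) => /val_inj -> ->.
  by split.
Qed.
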